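(* Let $K$ be an algebraically closed field and let $d,n$ be integers with $1<d<n$, $\gcd(n,d)=1$ and $\operatorname{char}(K)\nmid d$. Let $m>n$ be an integer and $\ell:=m/d$. Let $a,A\in K$ with $A\neq 0$. (a) Suppose $v(x)\in K[x]$ is such that $h(x)=A(x-a)^m+v(x)^d$ has degree $n$. Then $d\mid m$, $\deg(v)=\ell$, the leading coefficient $B$ of $v$ satisfies $B^d=-A$, and $v(x)=B(x-a)^{\ell}+q(x)$ with $q(x)\in K[x]$ a nonzero polynomial of degree $n-m+\ell$. In particular $n-m+\ell\geq 0$, i.e. $n\geq m(1-1/d)$. (b) Assume $d\mid m$ and $n-m+\ell\geq 0$. Let $q(x)\in K[x]$ be any polynomial of degree $n-m+\ell$, choose $B\in K$ with $A=-B^d$, and put $v(x):=Bx^{\ell}+q(x)$. Then $\deg(v)=\ell\geq 2$ and the polynomial $h(x)=Ax^m+v(x)^d$ has degree $n$. *)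

(* Defs.v *)
From HB Require Import structures.
From mathcomp Require Import all_boot all_order all_algebra.
Set Implicit Arguments. Unset Strict Implicit. Unset Printing Implicit Defensive.

(* Main.v *)
Require Import Defs.
From HB Require Import structures.
From mathcomp Require Import all_boot all_order all_algebra.
From mathcomp Require Import zify.
Import GRing.Theory.
Local Open Scope ring_scope.

Lemma key (K : idomainType) (w q : {poly K}) (l d : nat) :
 size w = l.+1 -> q != 0 -> (size q <= l)%N -> (0 < d)%N -> d%:R != 0 :> K ->
 size ((w+q)^+d - w^+d) = ((size q).-1 + l * d.-1).+1.
Proof.
move=> hw hq hql hd hdK.
rewrite subrXX addrAC subrr add0r.
set S := \sum_(i < d) _.
have hwq : size (w + q) = l.+1 by rewrite size_polyDl ?hw ?ltnS.
have lwq : lead_coef (w + q) = lead_coef w by rewrite lead_coefDl ?hw ?ltnS.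
have hB : lead_coef w != 0 by rewrite lead_coef_eq0 -size_poly_gt0 hw.
set N := (l * d.-1)%N.
have ht : forall i : 'I_d, size ((w+q)^+(d.-1-i) * w^+i) = N.+1 /\
   lead_coef ((w+q)^+(d.-1-i) * w^+i) = lead_coef w ^+ d.-1.
  move=> i.
  have hi : (i <= d.-1)%N by rewrite -ltnS prednK // ltn_ord.
  have hl : lead_coef ((w+q)^+(d.-1-i) * w^+i) = lead_coef w ^+ d.-1.
    by rewrite lead_coefM !lead_coef_exp lwq -exprD subnK.
  split=> //.
  have h1 : (w+q)^+(d.-1-i) != 0.
    by rewrite -lead_coef_eq0 lead_coef_exp lwq expf_neq0.
  have h2 : w^+i != 0 by rewrite -lead_coef_eq0 lead_coef_exp expf_neq0.
  rewrite size_mul // (polySpred h1) addSn /= (polySpred h2) addnS.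
  by rewrite !size_exp hwq hw /= -mulnDr subnK.
have hSN : S`_N = (lead_coef w ^+ d.-1) *+ d.
  rewrite coef_sum (eq_bigr (fun _ => lead_coef w ^+ d.-1)).
    by rewrite sumr_const card_ord.
  move=> i _; have [h1 h2] := ht i.
  by rewrite -h2 /lead_coef h1.
have hSle : (size S <= N.+1)%N.
  apply/leq_sizeP => j hj; rewrite coef_sum big1 // => i _.
  have [h1 _] := ht i; by rewrite nth_default // h1.
have hSne : S`_N != 0 by rewrite hSN -mulr_natr mulf_neq0 // expf_neq0.
have hS : size S = N.+1.
  apply: anti_leq; rewrite hSle /= ltnNge; apply/negP => /leq_sizeP h.
  by move: hSne; rewrite (h N (leqnn N)) eqxx.
have S0 : S != 0 by rewrite -size_poly_gt0 hS.
by rewrite size_mul // hS (polySpred hq) addSn addnS.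
Qed.

Lemma powy (K : idomainType) (y : {poly K}) (k : nat) :
  size y = 2 -> y \is monic -> size (y ^+ k) = k.+1 /\ lead_coef (y ^+ k) = 1.
Proof.
move=> hy my; have mk := monic_exp k my.
split; last exact/monicP.
by rewrite (polySpred (monic_neq0 mk)) size_exp hy mul1n.
Qed.

Lemma partA (K : idomainType) (y : {poly K}) (d n m : nat) (A : K)
  (hy : size y = 2) (my : y \is monic)
  (hd1 : (1 < d)%N) (hdK : d%:R != 0 :> K)
  (hmn : (n < m)%N) (hA : A != 0) (v : {poly K}) :
     size (A *: y ^+ m + v ^+ d) = n.+1 ->
     [/\ (d %| m)%N,
         size v = (m %/ d).+1,
         lead_coef v ^+ d = - A,
         exists q : {poly K},
           [/\ q != 0, ((size q).-1 + m = n + m %/ d)%N &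
               v = lead_coef v *: y ^+ (m %/ d) + q]
       & (m <= n + m %/ d)%N].
Proof.
move=> hh.
have hd0 : (0 < d)%N by apply: ltnW.
have [sym lym] := @powy _ y m hy my.
have hm : size (A *: y ^+ m) = m.+1 by rewrite size_scale.
have hvd : size (v ^+ d) = m.+1.
  case: (ltngtP (size (v ^+ d)) m.+1) => c //.
  - by move: hh; rewrite size_polyDl ?hm // => -[] e; lia.
  - by move: hh; rewrite addrC size_polyDl ?hm // => e; move: c; rewrite e; lia.
have v0 : v != 0.
  by apply/eqP => e; move: hvd; rewrite e expr0n gtn_eqF // size_poly0.
have hsv : ((size v).-1 * d = m)%N by rewrite -size_exp hvd.
have hdm : (d %| m)%N by rewrite -hsv dvdn_mull.
have hl : (m %/ d = (size v).-1)%N by rewrite -hsv mulnK.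
set l := (m %/ d)%N in hl *.
have hsvl : size v = l.+1 by rewrite hl -polySpred.
set B := lead_coef v.
have hBd : B ^+ d = - A.
  have : (A *: y ^+ m + v ^+ d)`_m = 0 by rewrite nth_default // hh.
  rewrite coefD coefZ.
  have -> : (y ^+ m)`_m = 1 by rewrite -lym /lead_coef sym.
  have -> : (v ^+ d)`_m = B ^+ d by rewrite /B -lead_coef_exp /lead_coef hvd.
  by rewrite mulr1 => /eqP; rewrite addrC addr_eq0 => /eqP.
have B0 : B != 0 by rewrite lead_coef_eq0.
have [syl lyl] := @powy _ y l hy my.
set w := B *: y ^+ l.
have hw : size w = l.+1 by rewrite size_scale.
set q := v - w.
have hvq : v = w + q by rewrite /q addrC subrK.
have hml : m = (l * d)%N by rewrite hl hsv.
have hwd : w ^+ d = - (A *: y ^+ m) by rewrite exprZn hBd scaleNr -exprM -hml.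
have hql : (size q <= l)%N.
  apply/leq_sizeP => j; rewrite leq_eqVlt => /orP[/eqP <-|hj].
    rewrite coefB coefZ.
    have -> : (y ^+ l)`_l = 1 by rewrite -lyl /lead_coef syl.
    by rewrite mulr1 /B /lead_coef hsvl subrr.
  by rewrite coefB coefZ !nth_default ?mulr0 ?subrr ?hsvl ?syl.
have q0 : q != 0.
  apply/eqP => e; move: hh; rewrite hvq e addr0 hwd subrr size_poly0.
  by [].
have hk := @key _ _ _ _ _ hw q0 hql hd0 hdK.
rewrite -hvq hwd opprK addrC hh in hk.
case: hk => hk.
have e : ((size q).-1 + m = n + l)%N.
  by rewrite hk hml -{1}(prednK hd0) mulnS [(l + _)%N]addnC addnA.
split => //.
  by exists q; split.
lia.
Qed.

Lemma dK (K : idomainType) (d : nat) : (0 < d)%N ->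
  (forall p : nat, p \in [pchar K] -> ~~ (p %| d)%N) -> d%:R != 0 :> K.
Proof.
move=> hd hchar; apply/negP => h.
have [p hp] := natf0_pchar hd h.
by move: (hchar p hp); rewrite (dvdn_pcharf hp) h.
Qed.

Theorem proposition5p3 (K : closedFieldType) (d n m : nat) (a A : K)
  (hd1 : (1 < d)%N) (hdn : (d < n)%N) (hcop : coprime n d)
  (hchar : forall p : nat, p \in [pchar K] -> ~~ (p %| d)%N)
  (hmn : (n < m)%N) (hA : A != 0) :
  (* (a) *)
  (forall v : {poly K},
     size (A *: ('X - a%:P) ^+ m + v ^+ d) = n.+1 ->
     [/\ (d %| m)%N,
         size v = (m %/ d).+1,
         lead_coef v ^+ d = - A,
         exists q : {poly K},
           [/\ q != 0, ((size q).-1 + m = n + m %/ d)%N &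
               v = lead_coef v *: ('X - a%:P) ^+ (m %/ d) + q]
       & (m <= n + m %/ d)%N])
  /\
  (* (b) *)
  ((d %| m)%N -> (m <= n + m %/ d)%N ->
   forall (q : {poly K}) (B : K),
     size q = (n + m %/ d - m).+1 ->
     A = - B ^+ d ->
     let v := B *: 'X ^+ (m %/ d) + q in
     [/\ size v = (m %/ d).+1, (2 <= m %/ d)%N &
         size (A *: 'X ^+ m + v ^+ d) = n.+1]).
Proof.
have hd0 : (0 < d)%N by apply: ltnW.
have hdK := @dK _ _ hd0 hchar.
split.
  move=> v; apply: partA => //; [exact: size_XsubC | exact: monicXsubC].
move=> hdm hle q B hq hAB v.
have hml : m = (m %/ d * d)%N by rewrite divnK.
set l := (m %/ d)%N in hml hle hq v *.
have B0 : B != 0 by apply/eqP => e; move: hA; rewrite hAB e expr0n gtn_eqF // oppr0 eqxx.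
have hw : size (B *: 'X^l) = l.+1 by rewrite size_scale // size_polyXn.
have hql : (size q <= l)%N by rewrite hq; lia.
have hv : size v = l.+1 by rewrite /v size_polyDl hw // ltnS.
have hl2 : (2 <= l)%N.
  rewrite ltnNge; apply/negP => h1.
  have : (l * d <= 1 * d)%N by apply: leq_mul.
  lia.
split => //.
have q0 : q != 0 by rewrite -size_poly_gt0 hq.
have hk := @key _ _ _ _ _ hw q0 hql hd0 hdK.
have hwd : (B *: 'X^l) ^+ d = - (A *: 'X^m) by rewrite exprZn hAB scaleNr opprK -exprM -hml.
rewrite hwd opprK addrC in hk.
rewrite hk hq /=.
have : (l * d = l + l * d.-1)%N by rewrite -{1}(prednK hd0) mulnS.
lia.
Qed.
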